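(* Let $P\subset\mathbb{R}^d$ be a finite point set satisfying the standing condition, let $\varepsilon\in(0,1)$, let $X$ be the set of extreme points of $P$, let $Q^*_\varepsilon$ be an optimal solution of GRMR (a minimum-cardinality $\varepsilon$-regret set of $P$), and let $Q_\varepsilon$ be the solution returned by the algorithm H-GRMR described in the context. Then $|Q_\varepsilon|\le\frac{|X|}{d+1}\cdot|Q^*_\varepsilon|$.
   Context: For finite $Q\subset\mathbb{R}^d$ and unit $x$, $\omega(x,Q)=\max_{p\in Q}\langle p,x\rangle$. Standing condition: $\omega(x,P)>0$ for all $x\in\mathbb{S}^{d-1}$. Regret ratio $l_x(Q)=1-\omega(x,Q)/\omega(x,P)$; $l(Q)=\max_{x\in\mathbb{S}^{d-1}}l_x(Q)$; $Q\subseteq P$ is an $\varepsilon$-regret set if $l(Q)\le\varepsilon$; GRMR asks for a minimum-cardinality $\varepsilon$-regret set. Voronoi cell $R(p)=\{x\ne0:\langle p,x\rangle\ge\omega(x,P)\}$; extreme points $X=\{t_1,\dots,t_m\}$ are the points with $R(p)\ne\varnothing$. The inner-product Delaunay graph $\mathcal{G}(P)$ is the undirected graph on $X$ with an edge $\{t_i,t_j\}$ iff $R(t_i)\cap R(t_j)\ne\varnothing$; $N(t)$ denotes the neighbors of $t$. For $t_i,t_j\in X$, $\varepsilon_{ij}$ is the optimal value of the linear program: maximize $1-\langle t_i,x\rangle$ subject to $\langle t_j-t,x\rangle\ge0$ for all $t\in N(t_j)$ and $\langle t_j,x\rangle=1$ (with $\varepsilon_{ij}=+\infty$ if unbounded).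 Algorithm H-GRMR on input $(P,X,\mathcal{G}(P),\varepsilon)$: Step 1: start with a directed graph $H_\varepsilon$ on $X$ with no edges; for each $t_i$, mark $t_i$ visited, enqueue all of $N(t_i)$, and while the queue is nonempty dequeue $t_j$; if $t_j$ is not visited, mark it visited, compute $\varepsilon_{ij}$, and if $\varepsilon_{ij}\le\varepsilon$ add edge $t_i\to t_j$ and enqueue all of $N(t_j)$ (visited marks reset for each $t_i$). Step 2: let $Dom(t_i)=\{t_i\}\cup\{t_j: t_i\to t_j\in H_\varepsilon\}$; set $Q_\varepsilon=\varnothing$, $U=X$; while $U\ne\varnothing$, pick $t^*\in X\setminus Q_\varepsilon$ maximizing $|Dom(t^* )\cap U|$, add $t^*$ to $Q_\varepsilon$ and remove $Dom(t^* )$ from $U$. Return $Q_\varepsilon$. *)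

(* Defs.v *)
From HB Require Import structures.
From mathcomp Require Import all_boot all_order all_algebra.
From mathcomp Require Import all_classical all_reals.
From mathcomp Require Import ereal.
Set Implicit Arguments. Unset Strict Implicit. Unset Printing Implicit Defensive.
Import Order.TTheory GRing.Theory Num.Theory.
Local Open Scope ring_scope.
Local Open Scope classical_set_scope.

Section GRMR.
Variables (R : realType) (d n : nat).
(* The point set P = { p i | i < n } (p injective), points are row vectors. *)
Variable p : 'I_n -> 'rV[R]_d.

Definition dot (u v : 'rV[R]_d) : R := \sum_(k < d) u 0 k * v 0 k.

Definition unitv (x : 'rV[R]_d) : Prop := dot x x = 1.

(* omega(x,Q) = max_{q in Q} <q,x>  (convention: 0 if Q is empty) *)
Definition omega (x : 'rV[R]_d) (Q : {set 'I_n}) : R :=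
  if [pick i in Q] is Some i0 then \big[Num.max/dot (p i0) x]_(i in Q) dot (p i) x
  else 0.

Definition standing : Prop := forall x, unitv x -> 0 < omega x [set: 'I_n]%SET.

Definition regret_x (x : 'rV[R]_d) (Q : {set 'I_n}) : R :=
  1 - omega x Q / omega x [set: 'I_n]%SET.

(* l(Q) <= eps, i.e. max over the unit sphere of l_x(Q) is <= eps *)
Definition eps_regret_set (eps : R) (Q : {set 'I_n}) : Prop :=
  forall x, unitv x -> regret_x x Q <= eps.

Definition GRMR_opt (eps : R) (Q : {set 'I_n}) : Prop :=
  eps_regret_set eps Q /\
  forall Q' : {set 'I_n}, eps_regret_set eps Q' -> (#|Q| <= #|Q'|)%N.

Definition voronoi (i : 'I_n) : set 'rV[R]_d :=
  [set x | x != 0 /\ omega x [set: 'I_n]%SET <= dot (p i) x].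

Definition extreme : {set 'I_n} := [set i | `[< voronoi i !=set0 >]].

(* inner-product Delaunay graph on X (simple graph, no loops) *)
Definition adj (i j : 'I_n) : bool :=
  [&& i \in extreme, j \in extreme, i != j &
      `[< (voronoi i `&` voronoi j) !=set0 >]].

Definition nbrs (j : 'I_n) : seq 'I_n := enum [pred k | adj j k].

(* eps_ij: optimal value (sup, in the extended reals) of the LP
   maximize 1 - <t_i,x> s.t. <t_j - t, x> >= 0 for t in N(t_j), <t_j,x> = 1 *)
Definition lp_feasible (j : 'I_n) : set 'rV[R]_d :=
  [set x | (forall k, adj j k -> 0 <= dot (p j - p k) x) /\ dot (p j) x = 1].

Definition eps_ij (i j : 'I_n) : \bar R :=
  ereal_sup [set ((1 - dot (p i) x)%:E) | x in lp_feasible j].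

(* Step 1 of H-GRMR: BFS from t_i. State = (visited, queue, out-neighbours in H_eps) *)
Definition bfs_step (eps : R) (i : 'I_n)
    (st : {set 'I_n} * seq 'I_n * {set 'I_n}) : {set 'I_n} * seq 'I_n * {set 'I_n} :=
  let: (vis, q, E) := st in
  match q with
  | [::] => st
  | j :: q' =>
      if j \in vis then (vis, q', E)
      else if `[< (eps_ij i j <= eps%:E)%E >]
           then (j |: vis, q' ++ nbrs j, j |: E)
           else (j |: vis, q', E)
  end.

Fixpoint bfs (eps : R) (i : 'I_n) (fuel : nat)
    (st : {set 'I_n} * seq 'I_n * {set 'I_n}) : {set 'I_n} * seq 'I_n * {set 'I_n} :=
  match fuel with
  | 0 => st
  | f.+1 => if st.1.2 is [::] then st else bfs eps i f (bfs_step eps i st)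
  end.

(* out-neighbours of t_i in H_eps; the fuel n*n+n+1 exceeds the total number of
   enqueued items, so the BFS runs until its queue is empty *)
Definition Hout (eps : R) (i : 'I_n) : {set 'I_n} :=
  (bfs eps i (n * n + n).+1%N ([set i]%SET, nbrs i, (@finset.set0 _))).2.

Definition Dom (eps : R) (i : 'I_n) : {set 'I_n} := i |: Hout eps i.

(* Step 2 of H-GRMR: greedy covering, arbitrary tie-breaking.
   greedy_run Q U Qf : starting from (Q,U), the loop may terminate with Qf. *)
Inductive greedy_run (eps : R) : {set 'I_n} -> {set 'I_n} -> {set 'I_n} -> Prop :=
| greedy_done Q : greedy_run eps Q (@finset.set0 _) Q
| greedy_step Q U t Qf :
    U != (@finset.set0 _) ->
    t \in extreme :\: Q ->
    (forall t', t' \in extreme :\: Q -> (#|Dom eps t' :&: U| <= #|Dom eps t :&: U|)%N) ->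
    greedy_run eps (t |: Q) (U :\: Dom eps t) Qf ->
    greedy_run eps Q U Qf.

Definition HGRMR_output (eps : R) (Q : {set 'I_n}) : Prop :=
  greedy_run eps (@finset.set0 _) extreme Q.

End GRMR.

(* Main.v *)
Require Import Defs.
From HB Require Import structures.
From mathcomp Require Import all_boot all_order all_algebra.
From mathcomp Require Import all_classical all_reals.
From mathcomp Require Import ring lra.
Import Order.TTheory GRing.Theory Num.Theory.
Local Open Scope ring_scope.

Lemma dotZ (R : realType) d (u v : 'rV[R]_d) (a : R) : dot u (a *: v) = a * dot u v.
Proof. rewrite /dot mulr_sumr; apply: eq_bigr => k _; rewrite mxE; ring. Qed.

Lemma dot_pos (R : realType) d (x : 'rV[R]_d) : x != 0 -> 0 < dot x x.
Proof.
move=> x0.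
have [l hl] : exists l, x 0 l != 0.
  apply/existsP; apply: contraNT x0; rewrite negb_exists => /forallP H.
  apply/eqP/matrixP => i j; rewrite (ord1 i) mxE; exact/eqP/negbNE/H.
rewrite /dot (bigD1 l) //=; apply: ltr_pwDl.
  by rewrite -expr2 lt0r sqr_ge0 andbT sqrf_eq0.
by apply: sumr_ge0 => i _; rewrite -expr2 sqr_ge0.
Qed.

Lemma exists_dir (R : realType) d n (p : 'I_n -> 'rV[R]_d) (Q : {set 'I_n}) :
  (0 < d)%N -> (#|Q| <= d)%N ->
  exists x : 'rV[R]_d, x != 0 /\ forall i, i \in Q -> dot (p i) x <= 0.
Proof.
move=> d0 Qd.
pose M : 'M[R]_(#|Q|, d) := \matrix_(j, l) p (enum_val j) 0 l.
have Mdot : forall (c : 'cV[R]_d) j, (M *m c) j 0 = dot (p (enum_val j)) c^T.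
  by move=> c j; rewrite /dot !mxE; apply: eq_bigr => l _; rewrite !mxE.
suff [c [c0 Hc]] : exists c : 'cV[R]_d, c != 0 /\ forall j, (M *m c) j 0 <= 0.
  exists c^T; split; first by rewrite trmx_eq0.
  move=> i iQ; rewrite -(enum_rankK_in iQ iQ) -Mdot; exact: Hc.
have [Q0|Qpos] := posnP #|Q|.
  exists (const_mx 1); split.
    apply/eqP => /matrixP /(_ (Ordinal d0) 0); rewrite !mxE => /eqP; by rewrite oner_eq0.
  by move=> j; have := ltn_ord j; rewrite {2}Q0.
have [rf|nrf] := boolP (row_free M).
  case/row_freeP: rf => B HB.
  exists (B *m (const_mx (-1) : 'cV_#|Q|)); split.
    apply: contraTneq isT => E.
    have : M *m (B *m const_mx (-1)) = const_mx (-1 : R) :> 'cV_#|Q|.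
      by rewrite mulmxA HB mul1mx.
    rewrite E mulmx0 => /matrixP /(_ (Ordinal Qpos) 0); rewrite !mxE => /eqP.
    by rewrite eq_sym oppr_eq0 oner_eq0.
  by move=> j; rewrite mulmxA HB mul1mx mxE lerN10.
have rk : (\rank M < d)%N.
  by apply: leq_trans Qd; rewrite ltn_neqAle nrf rank_leq_row.
have : kermx M^T != 0.
  apply: contraTneq rk => E; rewrite -leqNgt.
  have := mxrank_ker M^T; rewrite E mxrank0 mxrank_tr => /eqP; rewrite eq_sym subn_eq0.
  by [].
case/rowV0Pn => v /sub_kermxP vM v0.
exists v^T; split; first by rewrite trmx_eq0.
move=> j; have : (v *m M^T)^T j 0 = 0 by rewrite vM !mxE.
by rewrite trmx_mul trmxK => ->.
Qed.

Lemma omega_le0 (R : realType) d n (p : 'I_n -> 'rV[R]_d) (Q : {set 'I_n}) x :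
  (forall i, i \in Q -> dot (p i) x <= 0) -> omega p x Q <= 0.
Proof.
move=> H; rewrite /omega; case: pickP => [i0 i0Q|//].
apply: (big_ind (fun y => y <= 0)); first exact: H.
  by move=> a b ha hb; rewrite ge_max ha hb.
exact: H.
Qed.

Lemma card_lb (R : realType) d n (p : 'I_n -> 'rV[R]_d) (eps : R) (Q : {set 'I_n}) :
  (0 < d)%N -> standing p -> eps < 1 -> eps_regret_set p eps Q -> (d < #|Q|)%N.
Proof.
move=> d0 st e1 HQ; rewrite ltnNge; apply/negP => Qd.
have [x [x0 Hx]] := @exists_dir R d n p Q d0 Qd.
have s0 := @dot_pos R d x x0.
set s := dot x x in s0.
pose y := (Num.sqrt s)^-1 *: x.
have sq0 : 0 < Num.sqrt s by rewrite sqrtr_gt0.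
have uy : unitv y.
  rewrite /unitv /y dotZ.
  have -> : dot ((Num.sqrt s)^-1 *: x) x = (Num.sqrt s)^-1 * s.
    by rewrite /s /dot mulr_sumr; apply: eq_bigr => k _; rewrite mxE; ring.
  rewrite mulrA -expr2 exprVn sqr_sqrtr ?mulVf //; [exact: lt0r_neq0 | exact: ltW].
have Hy : omega p y Q <= 0.
  apply: omega_le0 => i iQ; rewrite /y dotZ pmulr_rle0 ?invr_gt0 //; exact: Hx.
have P0 := st y uy.
have := HQ y uy; rewrite /regret_x.
have : omega p y Q / omega p y [set: 'I_n]%SET <= 0.
  by apply: mulr_le0_ge0 => //; rewrite ltW // invr_gt0.
move=> h1 h2; lra.
Qed.

Lemma greedy_sub (R : realType) d n (p : 'I_n -> 'rV[R]_d) (eps : R) Q U Qf :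
  greedy_run p eps Q U Qf -> Q \subset extreme p -> Qf \subset extreme p.
Proof.
elim=> // Q' U' t Qf' _ ht _ _ IH sub; apply: IH.
by rewrite finset.subUset finset.sub1set sub andbT; move: ht; rewrite finset.in_setD => /andP[_ ->].
Qed.

Theorem theorem5 (R : realType) (d n : nat) (p : 'I_n -> 'rV[R]_d) (eps : R)
    (Qstar Qeps : {set 'I_n}) :
  injective p ->
  standing p ->
  0 < eps < 1 ->
  GRMR_opt p eps Qstar ->
  HGRMR_output p eps Qeps ->
  (#|Qeps|%:R : R) <= (#|extreme p|%:R / (d + 1)%:R) * #|Qstar|%:R.
Proof.
move=> _ st /andP[e0 e1] [HQ _] Hout.
have sub := @greedy_sub R d n p eps _ _ _ Hout (finset.sub0set _).
have cX : (#|Qeps| <= #|extreme p|)%N by apply: subset_leq_card.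
have [d0|dpos] := posnP d.
  have Xe : extreme p = finset.set0.
    apply/finset.setP => i; rewrite !finset.inE; apply/negbTE/negP => /asboolP [x [+ _]].
    by subst d; rewrite (thinmx0 x) eqxx.
  move: cX; rewrite Xe finset.cards0 leqn0 => /eqP ->; by rewrite !mul0r.
have cQ := @card_lb R d n p eps Qstar dpos st e1 HQ.
have X0 : (0 : R) <= #|extreme p|%:R by [].
have dd : (0 : R) < (d + 1)%:R by rewrite ltr0n addn1.
have cQR : ((d + 1)%:R : R) <= #|Qstar|%:R by rewrite ler_nat addn1.
have cXR : (#|Qeps|%:R : R) <= #|extreme p|%:R by rewrite ler_nat.
apply: (le_trans cXR); rewrite -mulrA -[X in X <= _]mulr1.
apply: ler_wpM2l => //.
by rewrite mulrC ler_pdivlMr // mul1r.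
Qed.
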